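(* Let $p>2$ be a prime, $n\ge1$, $A$ a finite abelian $p$-group and $G$ a group containing $A$ as a normal subgroup with $G/A\cong\mathbb{Z}_{p^n}$, generated by the image of an element $t\in G$. If $[e]_\varphi$ is a subgroup of $G$ for every $\varphi\in{\rm Aut}\,G$, then $t^{-1}at=a$ for every $a\in\Omega_1(A)$.
   Context: For an automorphism $\varphi$ of $G$, $[e]_\varphi=\{z^{-1}\varphi(z)\mid z\in G\}$. $\Omega_k(A)=\{a\in A\mid a^{p^k}=e\}$. *)

(* Defs.v *)
From HB Require Import structures.
From mathcomp Require Import all_boot all_fingroup all_solvable.
Set Implicit Arguments. Unset Strict Implicit. Unset Printing Implicit Defensive.
Local Open Scope group_scope.

Definition eclass (gT : finGroupType) (G : {set gT}) (phi : {perm gT}) : {set gT} :=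
  [set z^-1 * phi z | z in G].

Definition Omega (gT : finGroupType) (p k : nat) (A : {set gT}) : {set gT} :=
  [set a in A | a ^+ (p ^ k) == 1].

(* Main.v *)
Require Import Defs.
From HB Require Import structures.
From mathcomp Require Import all_boot all_fingroup all_solvable zify.
Set Implicit Arguments. Unset Strict Implicit.
Local Open Scope group_scope.

Lemma bin2_mul2 k : ('C(k, 2) * 2 = k * k.-1)%N.
Proof.
elim: k => [//|k IH]; rewrite binS bin1 /=.
case: k IH => [//|k] /= IH. nia.
Qed.

Lemma dvd_bin2 p k : prime p -> (2 < p)%N -> (p %| k)%N -> (p %| 'C(k, 2))%N.
Proof.
move=> pp p2 pk.
have cp2 : coprime p 2.
  by rewrite prime_coprime // dvdn_prime2 //; apply/eqP => e; rewrite e in p2.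
rewrite -(Gauss_dvdr _ cp2) mulnC bin2_mul2. by apply: dvdn_mulr.
Qed.

Lemma cent_ab (gT : finGroupType) (A : {group gT}) x y :
  abelian A -> x \in A -> y \in A -> commute x y.
Proof. by move=> abA xA yA; apply: (centsP abA). Qed.
Definition vv (gT : finGroupType) (t a : gT) (k : nat) : gT := (t ^+ k)^-1 * (t * a) ^+ k.

Lemma vvS (gT : finGroupType) (t a : gT) k : vv t a k.+1 = vv t a k ^ t * a.
Proof.
by rewrite /vv !expgSr invMg conjgE !mulgA.
Qed.

Lemma vvD (gT : finGroupType) (t a : gT) i j : vv t a (i + j) = vv t a i ^ (t ^+ j) * vv t a j.
Proof.
by rewrite /vv !expgD invMg conjgE !mulgA mulgK.
Qed.

Lemma vvE (gT : finGroupType) (A : {group gT}) (t a : gT) k :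
  abelian A -> a \in A -> [~ a, t] \in A -> [~ a, t] ^ t = [~ a, t] ->
  vv t a k = a ^+ k * [~ a, t] ^+ 'C(k, 2).
Proof.
move=> abA aA cA ct.
have cac : commute a [~ a, t] by apply: (centsP abA).
have aT : a ^ t = a * [~ a, t] by rewrite /commg mulKVg.
elim: k => [|k IH]; first by rewrite /vv !expg0 invg1 mulg1.
rewrite vvS IH conjMg !conjXg ct aT expgMn // binS bin1.
rewrite expgSr expgD -!mulgA; congr (_ * _).
rewrite mulgA -expgD -expgD addnC.
have cc : commute a ([~ a, t] ^+ ('C(k, 2) + k)) by apply: commuteX.
by rewrite cc.
Qed.

Lemma vvmod (gT : finGroupType) (t a : gT) N k :
  vv t a N = 1 -> vv t a (k %% N) = vv t a k.
Proof.
move=> vN.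
have tN : (t * a) ^+ N = t ^+ N.
  by apply: (mulgI (t ^+ N)^-1); rewrite mulVg -vN.
rewrite [in RHS](divn_eq k N) /vv !expgD mulnC !expgM tN -expgM invMg.
by rewrite -mulgA mulKg.

Qed.

Lemma bad_aut (gT : finGroupType) (p N : nat) (G A : {group gT}) (t a : gT) :
  prime p -> (2 < p)%N -> (p %| N)%N -> abelian A -> A <| G -> t \in G ->
  G / A = <[coset A t]> -> #[coset A t] = N ->
  a \in A -> a ^+ p = 1 -> [~ a, t] != 1 -> [~ a, t] ^ t = [~ a, t] ->
  exists2 phi, phi \in Aut G & ~~ group_set (eclass G phi).
Proof.
move=> pp p2 pN abA nAG tG GA ordt aA ap c1 ct.
set c := [~ a, t] in c1 ct.
have nA := normal_norm nAG.
have sAG := normal_sub nAG.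
have tN : t \in 'N(A) by apply: (subsetP nA).
have GN : {in G, forall x, x \in 'N(A)} by move=> x xG; apply: (subsetP nA).
have cA : c \in A by rewrite groupM ?groupV // memJ_norm.
have cp : c ^+ p = 1.
  rewrite /c /commg expgMn; last by apply: (centsP abA); rewrite ?groupV ?memJ_norm.
  by rewrite expgVn -conjXg ap conj1g invg1 mulg1.
have expN (x : gT) k : x ^+ p = 1 -> (p %| k)%N -> x ^+ k = 1.
  move=> xp pk; apply/eqP; rewrite -order_dvdn; apply: dvdn_trans pk.
  by rewrite order_dvdn xp.
have vN : vv t a N = 1.
  by rewrite (vvE _ abA) // expN // expN // ?mulg1 // dvd_bin2.
have vA k : vv t a k \in A by rewrite (vvE _ abA) // groupM ?groupX.
set idx := fun x => oapp val 0%N [pick i : 'I_N | coset A x == coset A t ^+ i].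
have idxP x : x \in G -> coset A x = coset A t ^+ idx x.
  move=> xG; rewrite /idx; case: pickP => [i /eqP //| none] /=.
  have := mem_quotient A xG; rewrite GA => /cyclePmin [i ilt ei].
  rewrite ordt in ilt; have := none (Ordinal ilt); by rewrite /= ei eqxx.
have vidx x k : x \in G -> coset A x = coset A t ^+ k -> vv t a (idx x) = vv t a k.
  move=> xG ek; rewrite -(vvmod k vN) -(vvmod (idx x) vN).
  have := idxP x xG; rewrite ek => /eqP; rewrite eq_expg_mod_order ordt => /eqP ->.
  by [].
set f := fun x => x * vv t a (idx x).
have fM : {in G &, {morph f : x y / x * y}}.
  move=> x y xG yG; rewrite /f.
  have -> : vv t a (idx (x * y)) = vv t a (idx x + idx y).
    apply: vidx; first by rewrite groupM.
    by rewrite morphM ?GN // /= (idxP x xG) (idxP y yG) expgD.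
  rewrite vvD.
  set j := idx y; set u := vv t a (idx x).
  have wA : (t ^+ j)^-1 * y \in A.
    apply: coset_idr; first by rewrite groupM ?groupV ?groupX ?GN.
    rewrite morphM ?groupV ?groupX ?GN // morphV ?groupX // morphX // /=.
    by change (coset A t ^- j * coset A y = 1); rewrite (idxP y yG) mulVg.
  have uA : u ^ (t ^+ j) \in A by rewrite memJ_norm ?groupX ?vA.
  set w := (t ^+ j)^-1 * y in wA.
  have ey : y = t ^+ j * w by rewrite /w mulKVg.
  have key : y * u ^ (t ^+ j) = u * y.
    clearbody u; rewrite ey -mulgA (cent_ab abA wA uA) conjgE mulgA mulKVg.
    by rewrite !mulgA.
  set v := vv t a j; clearbody u v.
  by rewrite [LHS]mulgA -(mulgA x) key -!mulgA.
pose fm := Morphism fM.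
have injf : 'injm fm.
  apply/injmP => x y xG yG /= exy.
  have cxy : coset A x = coset A y.
    by have := congr1 (coset A) exy; rewrite /f !coset_kerr ?vA.
  have eidx : idx x = idx y by rewrite /idx cxy.
  by move: exy; rewrite /f eidx => /mulIg.
have fG : fm @* G = G.
  apply/eqP; rewrite eqEcard card_injm // leqnn andbT.
  apply/subsetP => y /morphimP [x xN xG ->] /=.
  by rewrite groupM // (subsetP sAG) // vA.
exists (aut injf fG); first exact: Aut_aut.
apply/negP => gs.
have Emem z : z \in G -> vv t a (idx z) \in eclass G (aut injf fG).
  by move=> zG; apply/imsetP; exists z => //; rewrite autE //= /f mulKg.
have Einv y : y \in eclass G (aut injf fG) -> exists2 z, z \in G & y = vv t a (idx z).
  by case/imsetP => z zG ->; exists z => //; rewrite autE //= /f mulKg.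
have aE : a \in Group gs.
  have := Emem t tG; rewrite (vidx t 1%N) ?expg1 //.
  by rewrite /vv expg1 mulKg.
have v2E : a ^+ 2 * c \in Group gs.
  have := Emem (t ^+ 2) (groupX 2 tG).
  rewrite (vidx _ 2%N) ?groupX ?morphX ?GN // (vvE _ abA) //.
have cE : c \in eclass G (aut injf fG).
  have : a^-1 * (a^-1 * (a ^+ 2 * c)) \in Group gs.
    by apply: groupM; rewrite ?groupV //; apply: groupM; rewrite ?groupV.
  by rewrite expgS expg1 -mulgA !mulKg.
case/Einv: cE => z zG ec.
move: ec; rewrite (vvE _ abA) //; set k := idx z; set C := 'C(k, 2) => ec.
have cac : commute a c by apply: (centsP abA).
have aT : a ^ t = a * c by rewrite /c /commg mulKVg.
have akE : a ^+ k = c * (c ^+ C)^-1 by rewrite {1}ec mulgK.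
have e1 : (a ^+ k) ^ t = a ^+ k * c ^+ k by rewrite conjXg aT expgMn.
have e2 : (a ^+ k) ^ t = a ^+ k by rewrite akE conjMg conjVg conjXg ct.
have ck : c ^+ k = 1 by apply: (mulgI (a ^+ k)); rewrite -e1 e2 mulg1.
have oc : #[c] = p.
  apply/prime_nt_dvdP => //; first by rewrite order_eq1.
  by rewrite order_dvdn cp.
have pk : (p %| k)%N by rewrite -oc order_dvdn ck.
have ak : a ^+ k = 1 by apply: expN.
have cC : c ^+ C = 1 by apply: expN => //; apply: dvd_bin2.
by move: c1; rewrite ec ak cC mulg1 eqxx.
Qed.

Unset Implicit Arguments. Set Strict Implicit.

Theorem mainTheorem11 (gT : finGroupType) (p n : nat) (G A : {group gT}) (t : gT) :
  prime p -> (2 < p)%N -> (1 <= n)%N ->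
  abelian A -> p.-group A -> A <| G ->
  t \in G -> G / A = <[coset A t]> -> #|G / A| = (p ^ n)%N ->
  (forall phi, phi \in Aut G -> group_set (eclass G phi)) ->
  forall a, a \in Omega p 1 A -> a ^ t = a.
Proof.
move=> pp p2 n1 abA pA nAG tG GA oGA gsH a0 a0O.
case: (eqVneq (a0 ^ t) a0) => // na0; exfalso.
move: a0O; rewrite inE expn1 => /andP [a0A /eqP a0p].
have ordt : #[coset A t] = (p ^ n)%N by rewrite /order -GA.
have pN : (p %| p ^ n)%N by apply: dvdn_exp.
have tN : t \in 'N(A) by apply: (subsetP (normal_norm nAG)).
have stab x : x \in A -> x ^+ p = 1 -> [~ x, t] \in A /\ [~ x, t] ^+ p = 1.
  move=> xA xp; split; first by rewrite groupM ?groupV // memJ_norm.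
  rewrite /commg expgMn; last by apply: (centsP abA); rewrite ?groupV ?memJ_norm.
  by rewrite expgVn -conjXg xp conj1g invg1 mulg1.
have c1P x : ([~ x, t] == 1) = (x ^ t == x).
  by rewrite /commg -eq_mulVg1 eq_sym.
have pG : p.-group G.
  by rewrite -(pquotient_pgroup pA (normal_norm nAG)) /pgroup oGA pnatX pnat_id.
have nilG := pgroup_nil pG.
pose w k := iter k (fun x => [~ x, t]) a0.
have wL k : w k \in 'L_k.+1(G).
  elim: k => [|k IH]; first by rewrite lcn1 (subsetP (normal_sub nAG)).
  by rewrite lcnSn /=; apply: mem_commg.
have wO k : w k \in A /\ w k ^+ p = 1.
  elim: k => [|k [IH1 IH2]]; first by [].
  by apply: stab.
have wend : w (nil_class G).+1 = 1.
  have := wL (nil_class G).+1.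
  by rewrite (lcn_nil_classP _ nilG (leqnSn _)) => /set1P.
have claim m : (exists k, w k.+1 != 1 /\ w k.+2 == 1) \/ w m.+1 != 1.
  elim: m => [|m [IH|IH]]; first by right; rewrite /= c1P.
  - by left.
  - case: (eqVneq (w m.+2) 1) => h; first by left; exists m; split; rewrite ?h.
    by right.
case: (claim (nil_class G)) => [[k [h1 h2]]|]; last by rewrite wend eqxx.
have [aA ap] := wO k.
have [phi phiA ngs] : exists2 phi, phi \in Aut G & ~~ group_set (eclass G phi).
  apply: (bad_aut pp p2 pN abA nAG tG GA ordt aA ap) => //.
  by apply/eqP; rewrite -c1P.
by move: ngs; rewrite gsH.
Qed.
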